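(* Let $\alpha,t,n$ be positive integers and let $\mathcal{C}_W$ be a binary $t$-write WOM code on $n$ cells with encoders $\mathcal{E}^W_1,\ldots,\mathcal{E}^W_t$ and sum-rate $R_{\mathrm{sum}}$. Define the code $\mathcal{C}_{\alpha,1,1}$ on $n$ cells, starting from $\mathbf{c}_0=\mathbf{0}$, as follows: for the $i$-th write ($i\ge1$) let $i'=i\bmod 2(t+\alpha)\in\{1,\ldots,2(t+\alpha)\}$ and let $\mathbf{c}_i$ be the state after the $i$-th write. If $i'\in[1:t]$, a message $M\in[1:2^{nR_{i'}}]$ is written by $\mathbf{c}_i=\mathcal{E}^W_{i'}(M,\mathbf{c}_{i-1})$; if $i'=t+1$, no information is written and $\mathbf{c}_i=\mathbf{1}$ (all-one vector); if $i'\in[t+2:t+\alpha]$, no information is written and $\mathbf{c}_i=\mathbf{c}_{i-1}$; if $i'\in[t+\alpha+1:2t+\alpha]$, a message $M\in[1:2^{nR_{i'-t-\alpha}}]$ is written by $\mathbf{c}_i=\overline{\mathcal{E}^W_{i'-t-\alpha}(M,\overline{\mathbf{c}_{i-1}})}$; if $i'=2t+\alpha+1$, no information is written and $\mathbf{c}_i=\mathbf{0}$; if $i'\in[2t+\alpha+2:2(t+\alpha)]$, no information is written and $\mathbf{c}_i=\mathbf{c}_{i-1}$. Then $\mathcal{C}_{\alpha,1,1}$ is an $(\alpha,1,1)$-constrained code, and if $R_{\mathrm{sum}}=\log_2(t+1)$ (i.e. $\mathcal{C}_W$ is sum-rate optimal), then the rate of $\mathcal{C}_{\alpha,1,1}$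 is $\frac{\log_2(t+1)}{t+\alpha}$.
   Context: Convention: $x\bmod y$ is taken in $\{1,\ldots,y\}$; $[a:b]=\{a,\ldots,b\}$; $[1:2^{nR}]=\{1,\ldots,\lfloor2^{nR}\rfloor\}$; $\overline{\mathbf{u}}$ is the bitwise complement. A binary $t$-write WOM (write-once memory) code $[n,t;2^{nR_1},\ldots,2^{nR_t}]$ consists of encoders $\mathcal{E}^W_j:[1:2^{nR_j}]\times\{0,1\}^n\to\{0,1\}^n$ and decoders $\mathcal{D}^W_j:\{0,1\}^n\to[1:2^{nR_j}]$, $j=1,\ldots,t$, such that $\mathbf{c}\le\mathcal{E}^W_j(m,\mathbf{c})$ componentwise (cells only change from 0 to 1) and $\mathcal{D}^W_j(\mathcal{E}^W_j(m,\mathbf{c}))=m$; its sum-rate is $R_{\mathrm{sum}}=\sum_{j=1}^tR_j$. A code on $n$ binary cells consists, for each write $i\ge1$, of a real $R_i\ge0$, an encoder $\mathcal{E}_i:[1:2^{nR_i}]\times\{0,1\}^n\to\{0,1\}^n$ and decoder $\mathcal{D}_i$ with $\mathcal{D}_i(\mathcal{E}_i(m,\mathbf{u}))=m$ (both may depend on $i$; writes with no information have one message, $R_i=0$). Starting from the zero state, messages produce states $\mathbf{v}_i$. The code is $(\alpha,\beta,p)$-constrained if for every message sequence, every $i\ge0$ and every $1\le j\le n-\beta+1$, $|\{(k,\ell): v_{i+k,j+\ell}\ne v_{i+k+1,j+\ell}, 0\le k<\alpha, 0\le\ell<\beta\}|\le p$. Rate: $\lim_{m\to\infty}\frac1m\sum_{i=1}^mR_i$.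 *)

(* Defs.v *)
From Stdlib Require Import Reals ZArith.
From mathcomp Require Import all_boot.

Set Implicit Arguments.
Unset Strict Implicit.
Unset Printing Implicit Defensive.

(* States of n binary cells; cell k (0-based) of the paper's cell k+1. *)
Definition cells (n : nat) := {ffun 'I_n -> bool}.

Definition zeros n : cells n := [ffun=> false].
Definition ones n : cells n := [ffun=> true].
Definition compl n (c : cells n) : cells n := [ffun k => ~~ c k].
Definition cle n (c c' : cells n) : bool := [forall k, c k ==> c' k].

(* value of cell k (0-based), false outside range *)
Definition cellat n (c : cells n) (k : nat) : bool :=
  match insub k with Some o => c o | None => false end.

(* number of messages floor(2^{nR}) : [1:2^{nR}] = {1,...,msize n R} *)
Definition msize (n : nat) (r : R) : nat :=
  Z.to_nat (Int_part (Rpower (IZR 2) (Rmult (INR n) r))).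

Fixpoint psum (f : nat -> R) (m : nat) : R :=
  match m with O => R0 | S m' => Rplus (psum f m') (f (S m')) end.

Definition log2 (x : R) : R := Rdiv (ln x) (ln (IZR 2)).

Record WOM (n t : nat) := MkWOM {
  wR : nat -> R;
  wE : nat -> nat -> cells n -> cells n;
  wD : nat -> cells n -> nat
}.

(* states in which the j-th write may occur: reachable by writes 1..j-1 *)
Inductive wom_reach n t (W : WOM n t) : nat -> cells n -> Prop :=
| wr_init : wom_reach W 1 (zeros n)
| wr_step j c m : (1 <= j <= t)%N -> (1 <= m <= msize n (wR W j))%N ->
    wom_reach W j c -> wom_reach W j.+1 (wE W j m c).

Definition is_WOM n t (W : WOM n t) : Prop :=
  (forall j, (1 <= j <= t)%N -> Rle R0 (wR W j)) /\
  (forall j c m, (1 <= j <= t)%N -> wom_reach W j c ->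
     (1 <= m <= msize n (wR W j))%N ->
     cle c (wE W j m c) /\ wD W j (wE W j m c) = m).

Definition wom_sumrate n t (W : WOM n t) : R := psum (wR W) t.

Record code (n : nat) := MkCode {
  cR : nat -> R;
  cE : nat -> nat -> cells n -> cells n;
  cD : nat -> cells n -> nat
}.

Definition valid_msgs n (K : code n) (ms : nat -> nat) : Prop :=
  forall i, (1 <= i)%N -> (1 <= ms i <= msize n (cR K i))%N.

Fixpoint states n (K : code n) (ms : nat -> nat) (i : nat) : cells n :=
  match i with
  | O => zeros n
  | S i' => cE K i (ms i) (states K ms i')
  end.

Definition is_code n (K : code n) : Prop :=
  (forall i, (1 <= i)%N -> Rle R0 (cR K i)) /\
  (forall ms, valid_msgs K ms -> forall i, (1 <= i)%N ->
     cD K i (states K ms i) = ms i).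

(* (alpha,beta,p)-constrained; window start j is 0-based: 0 <= j <= n - beta *)
Definition constrained n (K : code n) (alpha beta p : nat) : Prop :=
  forall ms, valid_msgs K ms -> forall i j, (j + beta <= n)%N ->
    (\sum_(k < alpha) \sum_(l < beta)
        (cellat (states K ms (i + k)) (j + l)
           != cellat (states K ms (i + k).+1) (j + l)) <= p)%N.

Definition code_rate n (K : code n) (L : R) : Prop :=
  Un_cv (fun m => Rdiv (psum (cR K) m) (INR m)) L.

(* i' = i mod 2(t+alpha), taken in {1,...,2(t+alpha)} *)
Definition phase (t alpha i : nat) : nat := ((i - 1) %% (2 * (t + alpha))).+1.

Definition Ca11_R n t (alpha : nat) (W : WOM n t) (i : nat) : R :=
  let i' := phase t alpha i in
  if (1 <= i' <= t)%N then wR W i'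
  else if (t + alpha + 1 <= i' <= 2 * t + alpha)%N then wR W (i' - t - alpha)
  else R0.

Definition Ca11_E n t (alpha : nat) (W : WOM n t) (i m : nat) (c : cells n)
  : cells n :=
  let i' := phase t alpha i in
  if (1 <= i' <= t)%N then wE W i' m c
  else if i' == t + 1 then ones n
  else if (t + 2 <= i' <= t + alpha)%N then c
  else if (t + alpha + 1 <= i' <= 2 * t + alpha)%N then
    compl (wE W (i' - t - alpha) m (compl c))
  else if i' == 2 * t + alpha + 1 then zeros n
  else c.

(* decoders; writes without information have the single message 1 *)
Definition Ca11_D n t (alpha : nat) (W : WOM n t) (i : nat) (c : cells n) : nat :=
  let i' := phase t alpha i in
  if (1 <= i' <= t)%N then wD W i' c
  else if (t + alpha + 1 <= i' <= 2 * t + alpha)%N then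
    wD W (i' - t - alpha) (compl c)
  else 1.

Definition Ca11 n t (alpha : nat) (W : WOM n t) : code n :=
  MkCode (Ca11_R alpha W) (Ca11_E alpha W) (Ca11_D alpha W).

(* Main.v *)
Require Import Defs.
From Stdlib Require Import Reals Lra.
From mathcomp Require Import all_boot zify.
Set Warnings "-notation-overridden".

Lemma compl_invol n (c : cells n) : compl (compl c) = c.
Proof. by apply/ffunP => k; rewrite !ffunE negbK. Qed.
Lemma compl_ones n : compl (ones n) = zeros n.
Proof. by apply/ffunP => k; rewrite !ffunE. Qed.
Lemma cle_ones n (c : cells n) : cle c (ones n).
Proof. by apply/forallP => k; rewrite ffunE implybT. Qed.
Lemma cle_zeros n (c : cells n) : cle (zeros n) c.
Proof. by apply/forallP => k; rewrite ffunE. Qed.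
Lemma cle_refl n (c : cells n) : cle c c.
Proof. by apply/forallP => k; rewrite implybb. Qed.
Lemma cle_compl n (c d : cells n) : cle (compl c) d -> cle (compl d) c.
Proof.
move=> /forallP H; apply/forallP => k; move: (H k); rewrite !ffunE.
by case: (c k); case: (d k).
Qed.
Lemma cellat_cle n (c c' : cells n) j : cle c c' -> cellat c j ==> cellat c' j.
Proof. move=> /forallP H; rewrite /cellat; case: insub => [o|] //. Qed.

Lemma msize0 n : msize n R0 = 1%N.
Proof.
rewrite /msize Rmult_0_r Rpower_O; last by lra.
rewrite -(Int_part_spec 1 1%Z) //; simpl; lra.
Qed.

Lemma phaseS t alpha i : phase t alpha i.+1 = (i %% (2 * (t + alpha))).+1.
Proof. by rewrite /phase subSS subn0. Qed.

Lemma count_mono (b : nat -> bool) i a :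
  (forall k, (k < a)%N -> b (i + k) ==> b (i + k).+1) ->
  (\sum_(k < a) (b (i + k) != b (i + k).+1) + b i = b (i + a))%N.
Proof.
elim: a => [|a IH] H; first by rewrite big_ord0 addn0.
rewrite big_ord_recr /= -addnA (addnC _ (b i)) addnA IH; last first.
  by move=> k Hk; apply: H; lia.
have := H a (ltnSn a); rewrite addnS.
by case: (b (i + a)); case: (b (i + a).+1).
Qed.

Lemma count_le1 (b : nat -> bool) i a :
  ((forall k, (k < a)%N -> b (i + k) ==> b (i + k).+1) \/
   (forall k, (k < a)%N -> b (i + k).+1 ==> b (i + k))) ->
  (\sum_(k < a) (b (i + k) != b (i + k).+1) <= 1)%N.
Proof.
case=> H.
  have := @count_mono b i a H; case: (b (i + a)); case: (b i); lia.
have H' : forall k, (k < a)%N -> (fun x => ~~ b x) (i + k) ==> (fun x => ~~ b x) (i + k).+1.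
  by move=> k Hk; have := H k Hk; case: (b (i+k)); case: (b (i+k).+1).
have := @count_mono (fun x => ~~ b x) i a H'.
have -> : (\sum_(k < a) ((~~ b (i + k)) != (~~ b (i + k).+1)) = \sum_(k < a) (b (i + k) != b (i + k).+1))%N.
  by apply: eq_bigr => k _; case: (b (i+k)); case: (b (i+k).+1).
case: (b (i + a)); case: (b i) => /=; lia.
Qed.

Section S.
Variables (alpha t n : nat) (W : WOM n t).
Hypotheses (Ha : (0 < alpha)%N) (Ht : (0 < t)%N) (HW : is_WOM W).

Definition inv (q : nat) (c : cells n) : Prop :=
 if (q <= t)%N then wom_reach W q.+1 c
 else if (q <= t + alpha)%N then c = ones n
 else if (q <= 2*t+alpha)%N then wom_reach W (q - t - alpha).+1 (compl c)
 else c = zeros n.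

Ltac blast := repeat (case: ifP => ?; try (exfalso; lia)).

Lemma inv_step q m c : (q < 2 * (t + alpha))%N -> inv q c ->
  (1 <= m <= msize n (Ca11_R alpha W q.+1))%N ->
  inv (q.+1 %% (2 * (t + alpha))) (Ca11_E alpha W q.+1 m c).
Proof.
move=> Hq; rewrite /Ca11_R /Ca11_E /phase subSS subn0 (modn_small Hq).
have [Hlt|Heq] : (q.+1 < 2 * (t + alpha))%N \/ q.+1 = (2 * (t + alpha))%N by lia.
- rewrite (modn_small Hlt) /inv.
  have [Ha1|[Hb|[Hc|[Hd|[He|[Hf|Hg]]]]]] :
    (q < t \/ q = t \/ t < q < t + alpha \/ q = t + alpha \/ t + alpha < q < 2*t+alpha
     \/ q = 2*t+alpha \/ 2*t+alpha < q)%N by lia.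
  + blast => IH Hm. by apply: wr_step; [lia|exact Hm|exact IH].
  + blast => IH Hm. done.
  + blast => IH Hm. done.
  + blast => IH Hm.
    have -> : (q.+1 - t - alpha = 1)%N by lia.
    rewrite compl_invol IH compl_ones.
    rewrite (_ : (q.+1 - t - alpha = 1)%N) in Hm; last by lia.
    apply: wr_step; [lia|exact Hm|exact: wr_init].
  + blast => IH Hm.
    have E : (q.+1 - t - alpha = (q - t - alpha).+1)%N by lia.
    rewrite E compl_invol. apply: wr_step; [lia| by rewrite -E | exact IH].
  + blast => IH Hm. done.
  + blast => IH Hm. done.
- rewrite Heq modnn /inv.
  blast => IH Hm; first exact: wr_init. by rewrite IH; exact: wr_init.
Qed.


Lemma mono_step q m c : (q < 2 * (t + alpha))%N -> inv q c ->
  (1 <= m <= msize n (Ca11_R alpha W q.+1))%N ->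
  (((q < t + alpha) \/ (2 * t + alpha < q))%N -> cle c (Ca11_E alpha W q.+1 m c)) /\
  ((t < q)%N -> cle (Ca11_E alpha W q.+1 m c) c).
Proof.
move=> Hq; rewrite /Ca11_R /Ca11_E /phase subSS subn0 (modn_small Hq) /inv.
have [Ha1|[Hb|[Hc|[Hd|[He|[Hf|Hg]]]]]] :
    (q < t \/ q = t \/ t < q < t + alpha \/ q = t + alpha \/ t + alpha < q < 2*t+alpha
     \/ q = 2*t+alpha \/ 2*t+alpha < q)%N by lia.
+ blast => IH Hm; split => H; try (exfalso; lia).
  by case: (proj2 HW q.+1 c m ltac:(lia) IH Hm).
+ blast => IH Hm; split => H; try (exfalso; lia). exact: cle_ones.
+ blast => IH Hm; split => H; exact: cle_refl.
+ blast => IH Hm; split => H; try (exfalso; lia).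
  apply: cle_compl.
  rewrite (_ : (q.+1 - t - alpha = 1)%N) in Hm *; last by lia.
  rewrite IH compl_ones in Hm *.
  by case: (proj2 HW 1%N (zeros n) m ltac:(lia) (wr_init W) Hm).
+ blast => IH Hm; split => H; try (exfalso; lia).
  apply: cle_compl.
  have E : (q.+1 - t - alpha = (q - t - alpha).+1)%N by lia.
  rewrite E in Hm *.
  by case: (proj2 HW (q - t - alpha).+1 (compl c) m ltac:(lia) IH Hm).
+ blast => IH Hm; split => H; try (exfalso; lia). exact: cle_zeros.
+ blast => IH Hm; split => H; exact: cle_refl.
Qed.

Lemma dec_step q m c : (q < 2 * (t + alpha))%N -> inv q c ->
  (1 <= m <= msize n (Ca11_R alpha W q.+1))%N ->
  Ca11_D alpha W q.+1 (Ca11_E alpha W q.+1 m c) = m.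
Proof.
move=> Hq; rewrite /Ca11_R /Ca11_E /Ca11_D /phase subSS subn0 (modn_small Hq) /inv.
have [Ha1|[Hb|[Hc|[Hd|[He|[Hf|Hg]]]]]] :
    (q < t \/ q = t \/ t < q < t + alpha \/ q = t + alpha \/ t + alpha < q < 2*t+alpha
     \/ q = 2*t+alpha \/ 2*t+alpha < q)%N by lia.
+ blast => IH Hm.
  by case: (proj2 HW q.+1 c m ltac:(lia) IH Hm).
+ blast => IH; rewrite msize0; lia.
+ blast => IH; rewrite msize0; lia.
+ blast => IH Hm.
  rewrite compl_invol.
  rewrite (_ : (q.+1 - t - alpha = 1)%N) in Hm *; last by lia.
  rewrite IH compl_ones in Hm *.
  by case: (proj2 HW 1%N (zeros n) m ltac:(lia) (wr_init W) Hm).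
+ blast => IH Hm.
  rewrite compl_invol.
  have E : (q.+1 - t - alpha = (q - t - alpha).+1)%N by lia.
  rewrite E in Hm *.
  by case: (proj2 HW (q - t - alpha).+1 (compl c) m ltac:(lia) IH Hm).
+ blast => IH; rewrite msize0; lia.
+ blast => IH; rewrite msize0; lia.
Qed.

Lemma R_nonneg i : (1 <= i)%N -> Rle R0 (Ca11_R alpha W i).
Proof.
move=> _; rewrite /Ca11_R /phase.
case: ifP => H1; first by apply: (proj1 HW); lia.
case: ifP => H2; first by apply: (proj1 HW); lia.
exact: Rle_refl.
Qed.

Lemma ER_mod i : (forall m c, Ca11_E alpha W i.+1 m c = Ca11_E alpha W (i %% (2*(t+alpha))).+1 m c)
  /\ Ca11_R alpha W i.+1 = Ca11_R alpha W (i %% (2*(t+alpha))).+1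
  /\ (forall c, Ca11_D alpha W i.+1 c = Ca11_D alpha W (i %% (2*(t+alpha))).+1 c).
Proof. by rewrite /Ca11_E /Ca11_R /Ca11_D !phaseS modn_mod. Qed.

Lemma states_inv ms : valid_msgs (Ca11 alpha W) ms -> forall i,
  inv (i %% (2*(t+alpha))) (states (Ca11 alpha W) ms i).
Proof.
move=> V; elim=> [|i IH].
  rewrite mod0n /inv /=; exact: wr_init.
have -> : (i.+1 %% (2*(t+alpha)) = (i %% (2*(t+alpha))).+1 %% (2*(t+alpha)))%N
  by rewrite -addn1 -modnDml addn1.
have [E [ER _]] := ER_mod i.
rewrite /= E; apply: inv_step => //.
- by apply: ltn_pmod; lia.
- by rewrite -ER; apply: V.
Qed.

Lemma is_code_Ca : is_code (Ca11 alpha W).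
Proof.
split; first by move=> i Hi; apply: R_nonneg.
move=> ms V [|i] Hi //.
have [E [ER ED]] := ER_mod i.
rewrite /= ED E; apply: dec_step => //.
- by apply: ltn_pmod; lia.
- exact: states_inv.
- by rewrite -ER; apply: V.
Qed.

Lemma mono_at ms : valid_msgs (Ca11 alpha W) ms -> forall x,
  let q := (x %% (2 * (t + alpha)))%N in
  (((q < t + alpha) \/ (2 * t + alpha < q))%N ->
     cle (states (Ca11 alpha W) ms x) (states (Ca11 alpha W) ms x.+1)) /\
  ((t < q)%N -> cle (states (Ca11 alpha W) ms x.+1) (states (Ca11 alpha W) ms x)).
Proof.
move=> V x q.
have [E [ER _]] := ER_mod x.
rewrite /= E; apply: mono_step => //.
- by apply: ltn_pmod; lia.
- exact: states_inv.
- by rewrite -ER; apply: V.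
Qed.

Lemma constrained_Ca : constrained (Ca11 alpha W) alpha 1 1.
Proof.
move=> ms V i j Hj.
set b := fun x => cellat (states (Ca11 alpha W) ms x) j.
rewrite (eq_bigr (fun k : 'I_alpha => (b (i + k) != b (i + k).+1) : nat)); last first.
  by move=> k _; rewrite big_ord1 addn0.
apply: count_le1.
set P := (2 * (t + alpha))%N.
have HP : (0 < P)%N by rewrite /P; lia.
set q := (i %% P)%N.
have Hq : (q < P)%N by apply: ltn_pmod.
have Hik : forall k, (k < alpha)%N ->
   ((i + k) %% P = if (q + k < P)%N then q + k else q + k - P)%N.
  move=> k Hk; rewrite -modnDml -/q; case: ifP => H; first by rewrite modn_small.
  have -> : (q + k = (q + k - P) + P)%N by lia.
  by rewrite modnDr modn_small; lia.
have [Hmid|Hout] : ((t < q <= 2 * t + alpha) \/ ~~ (t < q <= 2 * t + alpha))%N by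
  case: (_ && _); [left|right].
- right => k Hk; apply: cellat_cle.
  have := proj2 (@mono_at ms V (i + k)); rewrite Hik //.
  case: ifP => H; last by lia.
  by move=> /(_ ltac:(lia)).
- left => k Hk; apply: cellat_cle.
  have := proj1 (@mono_at ms V (i + k)); rewrite Hik //.
  by case: ifP => H /(_ ltac:(lia)).
Qed.

End S.
Section RS. Local Open Scope R_scope.

Lemma psum_ext f g m : (forall i, (1 <= i <= m)%N -> f i = g i) -> psum f m = psum g m.
Proof.
elim: m => [|m IH] H //=.
rewrite IH; last by move=> i Hi; apply: H; lia.
by rewrite H //; lia.
Qed.

Lemma psum_add f a b : psum f (a + b) = psum f a + psum (fun i => f (a + i)%N) b.
Proof.
elim: b => [|b IH] /=; first by rewrite addn0; lra.
by rewrite addnS /= IH; lra.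
Qed.

Lemma psum_zero f m : (forall i, (1 <= i <= m)%N -> f i = 0) -> psum f m = 0.
Proof.
move=> H; rewrite (@psum_ext f (fun _ => 0)) //.
by elim: m {H} => [|m IH] //=; rewrite IH; lra.
Qed.

Lemma psum_shift f P : (forall i, (1 <= i)%N -> f (i + P)%N = f i) ->
  forall m, psum f (m + P) = psum f m + psum f P.
Proof.
move=> H; elim=> [|m IH]; first by rewrite add0n /=; lra.
by rewrite addSn /= IH -addSn H //; lra.
Qed.

Lemma psum_period f P : (forall i, (1 <= i)%N -> f (i + P)%N = f i) ->
  forall q r, psum f (q * P + r) = INR q * psum f P + psum f r.
Proof.
move=> H; elim=> [|q IH] r; first by rewrite mul0n add0n /=; lra.
rewrite mulSn (addnC P) -addnA (addnC P) addnA psum_shift // IH S_INR; lra.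
Qed.

Lemma psum_mono f : (forall i, (1 <= i)%N -> 0 <= f i) ->
  forall r d, 0 <= psum f r <= psum f (r + d).
Proof.
move=> H r d; split.
  elim: r => [|r IH] /=; [lra|]; have := H r.+1 isT; lra.
elim: d => [|d IH]; first by rewrite addn0; lra.
rewrite addnS /=; have := H (r + d).+1 isT; lra.
Qed.

Lemma periodic_cv f P : (0 < P)%N -> (forall i, (1 <= i)%N -> 0 <= f i) ->
  (forall i, (1 <= i)%N -> f (i + P)%N = f i) ->
  Un_cv (fun m => psum f m / INR m) (psum f P / INR P).
Proof.
move=> HP Hnn Hper.
set S := psum f P.
have HS : 0 <= S by have := @psum_mono f Hnn 0 P; rewrite add0n -/S; lra.
have HPR : 0 < INR P by apply: lt_0_INR; apply/ltP.
have bound : forall m, (0 < m)%N -> Rabs (psum f m / INR m - S / INR P) <= S / INR m.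
  move=> m Hm.
  have Hmr : 0 < INR m by apply: lt_0_INR; apply/ltP.
  have Em := divn_eq m P.
  set q := (m %/ P)%N in Em; set r := (m %% P)%N in Em.
  have Hr : (r <= P)%N by apply: ltnW; apply: ltn_pmod.
  have He := @psum_mono f Hnn r (P - r).
  rewrite subnKC // -/S in He.
  have Hps : psum f m = INR q * S + psum f r by rewrite Em psum_period.
  have HmR : INR m = INR q * INR P + INR r by rewrite Em plus_INR mult_INR.
  have Hrr : INR r <= INR P by apply: le_INR; apply/leP.
  set e := psum f r in He Hps.
  set a := S / INR P.
  have Ha : 0 <= a by apply: Rmult_le_pos; [exact: HS | apply: Rlt_le; apply: Rinv_0_lt_compat].
  have HaP : INR P * a = S by rewrite /a; field; lra.
  have key : psum f m / INR m - S / INR P = (e - INR r * a) / INR m.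
    rewrite Hps /a HmR; field; lra.
  rewrite key; apply: Rabs_le.
  have Hi : 0 < / INR m by apply: Rinv_0_lt_compat.
  have H1 : INR r * a <= S by nra.
  have H2 : 0 <= INR r * a by have := pos_INR r; nra.
  rewrite /Rdiv; split; nra.
move=> eps Heps.
have [N [HN HN0]] := archimed_cor1 (eps / (S + 1)) ltac:(apply: Rdiv_lt_0_compat; lra).
exists N => m Hm.
have HmN : (N <= m)%N by apply/leP; lia.
have Hm0 : (0 < m)%N by apply/ltP; lia.
rewrite /R_dist; apply: Rle_lt_trans (bound m Hm0) _.
have HNr : 0 < INR N by apply: lt_0_INR.
have HNm : INR N <= INR m by apply: le_INR; apply/leP.
have Hinv : / INR m <= / INR N by apply: Rinv_le_contravar.
have Hinv0 : 0 < / INR m by apply: Rinv_0_lt_compat; lra.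
have HE : eps / (S + 1) * (S + 1) = eps by field; lra.
rewrite /Rdiv; nra.
Qed.
End RS.

Section S.
Variables (alpha t n : nat) (W : WOM n t).
Hypotheses (Ha : (0 < alpha)%N) (Ht : (0 < t)%N).

Lemma phase_small i : (1 <= i <= 2 * (t + alpha))%N -> phase t alpha i = i.
Proof. move=> H; rewrite /phase modn_small; lia. Qed.

Lemma R_period i : (1 <= i)%N ->
  Ca11_R alpha W (i + 2 * (t + alpha))%N = Ca11_R alpha W i.
Proof.
move=> Hi; rewrite /Ca11_R /phase.
have -> : (i + 2 * (t + alpha) - 1 = (i - 1) + 2 * (t + alpha))%N by lia.
by rewrite modnDr.
Qed.

Ltac blast := repeat (case: ifP => ?; try (exfalso; lia)).

Lemma R_sum : psum (Ca11_R alpha W) (2 * (t + alpha)) = Rmult 2 (psum (wR W) t).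
Proof.
have -> : (2 * (t + alpha) = t + (alpha + (t + alpha)))%N by lia.
rewrite !psum_add.
rewrite (@psum_ext _ (wR W) t); last first.
  move=> i Hi; rewrite /Ca11_R phase_small; [blast; done|lia].
rewrite (@psum_zero _ alpha); last first.
  move=> i Hi; rewrite /Ca11_R phase_small; [blast; done|lia].
rewrite (@psum_zero _ alpha); last first.
  move=> i Hi; rewrite /Ca11_R phase_small; [blast; done|lia].
rewrite (@psum_ext _ (wR W) t); last first.
  move=> i Hi; rewrite /Ca11_R phase_small; last by lia.
  blast; congr (wR W _); lia.
lra.
Qed.
End S.
Theorem theorem6 (alpha t n : nat) (W : WOM n t) :
  (0 < alpha)%N -> (0 < t)%N -> (0 < n)%N -> is_WOM W ->
  (is_code (Ca11 alpha W) /\ constrained (Ca11 alpha W) alpha 1 1) /\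
  (wom_sumrate W = log2 (Rplus (INR t) R1) ->
   code_rate (Ca11 alpha W) (Rdiv (log2 (Rplus (INR t) R1)) (INR (t + alpha)))).
Proof.
move=> Ha Ht Hn HW; split; first by split; [exact: is_code_Ca | exact: constrained_Ca].
move=> Hsum.
have HP : (0 < 2 * (t + alpha))%N by lia.
have H := @periodic_cv (Ca11_R alpha W) (2 * (t + alpha)) HP
  (@R_nonneg alpha t n W Ha Ht HW) (@R_period alpha t n W Ha Ht).
rewrite R_sum // in H.
have HT : Rlt R0 (INR (t + alpha)) by apply: lt_0_INR; apply/ltP; lia.
have E : Rdiv (Rmult 2 (psum (wR W) t)) (INR (2 * (t + alpha)))
       = Rdiv (log2 (Rplus (INR t) R1)) (INR (t + alpha)).
  rewrite -Hsum /wom_sumrate mult_INR /=; field; lra.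
rewrite E in H; exact H.
Qed.
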